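(* Suppose $\mathbb{F}$ has characteristic $2$ and $S$ is a symplectic form on $V$. Then there is no Weyl multiplier $m$ for $(V,S)$ taking values in $\{+1,-1\}$.
   Context: $\mathbb{F}$ is a finite field with $|\mathbb{F}|=2^n$, $\mathrm{Tr}:\mathbb{F}\to\mathbb{Z}_2$ is the field trace, and $V$ is a $2$-dimensional $\mathbb{F}$-vector space. A symplectic form is a nonzero $\mathbb{F}$-bilinear $S:V\times V\to\mathbb{F}$ with $S(\mathbf{v},\mathbf{v})=0$ for all $\mathbf{v}$. A Weyl multiplier for $(V,S)$ is a function $m:V\times V\to\{z\in\mathbb{C}:|z|=1\}$ with the following properties: - the cocycle identity $m(\mathbf{u}+\mathbf{v},\mathbf{w})m(\mathbf{u},\mathbf{v})=m(\mathbf{u},\mathbf{v}+\mathbf{w})m(\mathbf{v},\mathbf{w})$ holds; - $m(\mathbf{d}_1,\mathbf{d}_2)=1$ whenever $\mathbf{d}_1,\mathbf{d}_2$ lie in a common $1$-dimensional subspace; - $\overline{m(\mathbf{u},\mathbf{v})}m(\mathbf{v},\mathbf{u})=(-1)^{\mathrm{Tr}\,S(\mathbf{u},\mathbf{v})}$ for all $\mathbf{u},\mathbf{v}\in V$. *)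

(* Defs.v *)
From HB Require Import structures.
From mathcomp Require Import all_boot all_order all_algebra all_field.
Set Implicit Arguments. Unset Strict Implicit. Unset Printing Implicit Defensive.
Import Order.TTheory GRing.Theory Num.Theory.
Local Open Scope ring_scope.

(* Absolute trace F -> F_2 of a field F with |F| = 2^n, computed inside F:
   Tr x = x + x^2 + x^4 + ... + x^(2^(n-1)); its value lies in {0,1} of F. *)
Definition fieldTr (F : finFieldType) (n : nat) (x : F) : F :=
  \sum_(i < n) x ^+ (2 ^ i)%N.

Definition signTr (F : finFieldType) (n : nat) (x : F) : algC :=
  if fieldTr n x == 0 then 1 else -1.

Definition bilinear_form (F : fieldType) (V : vectType F) (S : V -> V -> F) : Prop :=
  (forall (a : F) (u v w : V), S (a *: u + v) w = a * S u w + S v w) /\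
  (forall (a : F) (u v w : V), S u (a *: v + w) = a * S u v + S u w).

Definition symplectic_form (F : fieldType) (V : vectType F) (S : V -> V -> F) : Prop :=
  [/\ bilinear_form S, (forall v : V, S v v = 0) & (exists u v : V, S u v != 0)].

Definition common_line (F : fieldType) (V : vectType F) (d1 d2 : V) : Prop :=
  exists U : {vspace V}, [/\ \dim U = 1%N, d1 \in U & d2 \in U].

Definition weyl_multiplier (F : finFieldType) (n : nat) (V : vectType F)
    (S : V -> V -> F) (m : V -> V -> algC) : Prop :=
  [/\ (forall u v : V, `|m u v| = 1),
      (forall u v w : V, m (u + v) w * m u v = m u (v + w) * m v w),
      (forall d1 d2 : V, common_line d1 d2 -> m d1 d2 = 1)
    & (forall u v : V, (m u v)^* * m v u = signTr n (S u v))].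

(* Main.v *)
Require Import Defs.
From HB Require Import structures.
From mathcomp Require Import all_boot all_order all_algebra all_field.
Import Order.TTheory GRing.Theory Num.Theory.
Local Open Scope ring_scope.

Lemma size_trpoly (F : fieldType) (k : nat) :
  size (\sum_(i < k.+1) ('X^(2 ^ i)%N : {poly F})) = (2 ^ k).+1.
Proof.
elim: k => [|k IH]; first by rewrite big_ord1 size_polyXn.
rewrite big_ord_recr /= addrC size_polyDl size_polyXn //.
by rewrite IH ltnS ltn_exp2l.
Qed.

Lemma tr_nonzero (F : finFieldType) (n : nat) :
  #|F| = (2 ^ n)%N -> exists x : F, fieldTr n x != 0.
Proof.
move=> hF; case: n hF => [|k] hF.
  exfalso; have := oner_neq0 F; apply/negP; rewrite negbK.
  have /card1P [x hx] : #|F| == 1%N by rewrite hF.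
  by move: (hx 1) (hx 0); rewrite !inE /= => /esym/eqP -> /esym/eqP ->.
apply/existsP; rewrite -negb_forall; apply/negP => /forallP hall.
pose p : {poly F} := \sum_(i < k.+1) 'X^(2 ^ i)%N.
have hs := size_trpoly F k.
have hp : p != 0 by rewrite -size_poly_eq0 hs.
have := max_poly_roots hp (rs := enum F).
rewrite enum_uniq hs -cardE hF => /(_ _ isT).
have -> : all (root p) (enum F).
  apply/allP => x _; rewrite /root /p horner_sum.
  rewrite (eq_bigr (fun i : 'I_k.+1 => x ^+ (2 ^ i)%N)).
    exact: hall x.
  by move=> i _; rewrite hornerXn.
move=> /(_ isT); rewrite ltnS leqNgt ltn_exp2l // ltnSn //.
Qed.

Lemma line_of (F : fieldType) (V : vectType F) (w : V) :
  \dim (fullv : {vspace V}) = 2%N ->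
  exists U : {vspace V}, [/\ \dim U = 1%N, w \in U & 0 \in U].
Proof.
move=> hd; case: (eqVneq w 0) => [->|hw].
  exists <[vpick fullv]>%VS; split; rewrite ?mem0v //.
  have hf : (fullv : {vspace V}) != 0%VS.
    by apply/eqP => h; move: hd; rewrite h dimv0.
  by rewrite dim_vline vpick0 hf.
by exists <[w]>%VS; rewrite dim_vline hw memv_line mem0v.
Qed.

Theorem mainTheorem6 (F : finFieldType) (n : nat) (V : vectType F)
    (S : V -> V -> F) :
  #|F| = (2 ^ n)%N ->
  2%N \in [pchar F] ->
  \dim (fullv : {vspace V}) = 2%N ->
  symplectic_form S ->
  ~ exists m : V -> V -> algC,
      weyl_multiplier n S m /\ (forall u v : V, m u v = 1 \/ m u v = -1).
Proof.
move=> hF h2 hd [[bil1 bil2] halt [u0 [v0 hS]]] [m [[_ coc lin sgn] pm]].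
have hsq : forall x : algC, x = 1 \/ x = -1 -> x * x = 1.
  by move=> x [->|->]; rewrite ?mulr1 ?mulrNN ?mulr1.
have hww : forall w, m w w = 1.
  move=> w; apply: lin; have [U [h1 h2' _]] := @line_of _ _ w hd; by exists U.
have hw0 : forall w, m w 0 = 1.
  move=> w; apply: lin; have [U [h1 h2' h3]] := @line_of _ _ w hd; by exists U.
have hvv : forall w : V, w + w = 0.
  by move=> w; rewrite -mulr2n -scaler_nat (pcharf0 h2) scale0r.
have id1 : forall u v, m (u + v) v = m u v.
  move=> u v; have := coc u v v; rewrite hvv hw0 hww mulr1 => e.
  by rewrite -[LHS]mulr1 -(hsq _ (pm u v)) mulrA e mul1r.
have sym : forall u v, m u v = m v u.
  move=> u v; have := coc (u + v) u v.
  rewrite -addrA [u + v]addrC addrA.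
  have -> : u + v + u = v by rewrite [u + v]addrC -addrA hvv addr0.
  by rewrite !hww !mul1r id1 => ->.
have tr0 : forall u v, fieldTr n (S u v) = 0.
  move=> u v; have := sgn u v; rewrite /signTr [m v u]sym.
  have -> : (m u v)^* = m u v by case: (pm u v) => ->; rewrite ?rmorph1 ?rmorphN1.
  rewrite hsq //; case: eqP => // _ e; exfalso; move: e; apply/eqP.
  by rewrite -addr_eq0 -(natrD _ 1 1) pnatr_eq0.
have [x hx] := @tr_nonzero F n hF.
have S0 : forall w, S 0 w = 0.
  move=> w; have := bil1 1 0 0 w; rewrite scale1r addr0 mul1r => e.
  by have := congr1 (fun t => t - S 0 w) e; rewrite /= subrr addrK => h; rewrite -h.
have := tr0 ((x / S u0 v0) *: u0) v0.
rewrite -[_ *: u0]addr0 bil1 S0 addr0 divfK //.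
by move/eqP; rewrite (negbTE hx).
Qed.
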